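(* Let $a\in\mathbb{R}$ with $a>5$ and $n\in\mathbb{N}$. Let $E_n(a,1)$ be the $(n+1)\times n$ matrix whose $(i,j)$ entry is $-a$ if $i=j$, $1$ if $j=i+1$, $a$ if $i=j+1$, $-1$ if $i=j+2$, and $0$ otherwise. Then for every $1\le k\le n+1$, the $n\times n$ matrix $E_n^k(a,1)$ obtained by deleting the $k$-th row of $E_n(a,1)$ is invertible; that is, all order-$n$ minors of $E_n(a,1)$ are nonzero. *)

(* Defs.v *)
(* Indices are 0-based ordinals; the paper's 1-based (i,j)
   conditions i=j, j=i+1, i=j+1, i=j+2 are invariant under the shift. *)
From mathcomp Require Import all_boot all_order all_algebra.
From mathcomp Require Import reals.
Set Implicit Arguments. Unset Strict Implicit. Unset Printing Implicit Defensive.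
Import Order.TTheory GRing.Theory Num.Theory.
Local Open Scope ring_scope.

Definition Emx (R : pzRingType) (n : nat) (a : R) : 'M[R]_(n.+1, n) :=
  \matrix_(i < n.+1, j < n)
    (if i == j :> nat then - a
     else if j == i.+1 :> nat then 1
     else if i == j.+1 :> nat then a
     else if i == j.+2 :> nat then -1
     else 0).

Definition Edel (R : pzRingType) (n : nat) (a : R) (k : 'I_n.+1) : 'M[R]_n :=
  \matrix_(i < n, j < n) Emx n a (lift k i) j.

(* Main.v *)
Require Import Defs.
From mathcomp Require Import all_boot all_order all_algebra.
From mathcomp Require Import reals ring lra zify.
Import Order.TTheory GRing.Theory Num.Theory.
Local Open Scope ring_scope.

Section H.
Variable R : comPzRingType.

Lemma sum_pred_nat (m : nat) (f : nat -> R) (x : nat) :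
  \sum_(i < m | (i : nat) == x) f i = if (x < m)%N then f x else 0.
Proof.
case: (ltnP x m) => hx.
  rewrite (big_pred1 (Ordinal hx)) //= => i; by rewrite /= -val_eqE.
rewrite big_pred0 // => i; apply/negbTE; apply/eqP => e.
by move: (ltn_ord i); rewrite e ltnNge hx.
Qed.

Lemma sum_ind (m : nat) (F : 'I_m -> R) (P : pred 'I_m) :
  \sum_(i < m) (P i)%:R * F i = \sum_(i < m | P i) F i.
Proof. rewrite [RHS]big_mkcond /=; apply eq_bigr => i _; case: (P i) => /=; by rewrite ?mul1r ?mul0r. Qed.

Lemma Eentry (n : nat) (a : R) (r : 'I_n.+1) (j : 'I_n) :
  Emx n a r j = (r == j :> nat)%:R * (- a) + (j == r.+1 :> nat)%:R
     + (r == j.+1 :> nat)%:R * a - (r == j.+2 :> nat)%:R.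
Proof.
rewrite mxE.
by do 4 (case: eqP => ? /=); try (exfalso; lia); ring.
Qed.

Definition vx (n : nat) (c : 'cV[R]_n) (j : nat) := \sum_(i < n | (i : nat) == j) c i 0.
Arguments vx {n}.

Lemma vx_ord (n : nat) (c : 'cV[R]_n) (i : 'I_n) : vx c i = c i 0.
Proof. by rewrite /vx (big_pred1 i) // => x; rewrite /= -val_eqE. Qed.

Lemma vx_ge (n : nat) (c : 'cV[R]_n) (j : nat) : (n <= j)%N -> vx c j = 0.
Proof.
move=> h; rewrite /vx big_pred0 // => i; apply/negbTE; apply/eqP => e.
by move: (ltn_ord i); rewrite e ltnNge h.
Qed.

Lemma shift1 (n : nat) (c : 'cV[R]_n) (r : nat) :
  \sum_(i < n | i.+1 == r) c i 0 = if r is r1.+1 then vx c r1 else 0.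
Proof. by case: r => [|r1]; [rewrite big_pred0 | apply: eq_bigl => i; rewrite eqSS]. Qed.

Lemma shift2 (n : nat) (c : 'cV[R]_n) (r : nat) :
  \sum_(i < n | i.+2 == r) c i 0 = if r is r1.+2 then vx c r1 else 0.
Proof. by case: r => [|[|r1]]; [rewrite big_pred0 | rewrite big_pred0 | apply: eq_bigl => i; rewrite !eqSS]. Qed.

Lemma Erow (n : nat) (a : R) (c : 'cV[R]_n) (r : 'I_n.+1) :
  (Emx n a *m c) r 0 = vx c r.+1 - a * vx c r
     + (if (r : nat) is r1.+1 then a * vx c r1 - (if r1 is r2.+1 then vx c r2 else 0) else 0).
Proof.
rewrite mxE.
rewrite (eq_bigr (fun j : 'I_n => (j == r :> nat)%:R * (c j 0 * -a) + (j == r.+1 :> nat)%:R * c j 0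
   + ((j.+1 == r :> nat)%:R * (c j 0 * a) - (j.+2 == r :> nat)%:R * c j 0))); last first.
  move=> j _; rewrite Eentry (eq_sym (r : nat)) (eq_sym (r : nat)) (eq_sym (r : nat)); ring.
rewrite !big_split /= sumrN !sum_ind -!mulr_suml.
rewrite -/(vx c r) -/(vx c r.+1).
rewrite shift1 shift2.
case: r => [[|[|r2]] hr] /=; ring.
Qed.

Lemma eq_by (c e x y : R) : e = 0 -> x - y = c * e -> x = y.
Proof. by move=> -> h; apply/eqP; rewrite -subr_eq0 h mulr0. Qed.

Lemma Ecol (n : nat) (a t : R) (hp : 1 - a * t + a * t ^+ 2 - t ^+ 3 = 0) (j : 'I_n) :
  ((\row_(r < n.+1) t ^+ r.+1) *m Emx n a) 0 j =
     - (j == 0%N :> nat)%:R + (j == n.-1 :> nat)%:R * t ^+ n.+2.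
Proof.
rewrite mxE.
rewrite (eq_bigr (fun r : 'I_n.+1 => (r == j :> nat)%:R * (t ^+ r.+1 * -a) + (j == r.+1 :> nat)%:R * t ^+ r.+1
   + ((r == j.+1 :> nat)%:R * (t ^+ r.+1 * a) - (r == j.+2 :> nat)%:R * t ^+ r.+1))); last first.
  move=> r _; rewrite mxE Eentry; ring.
rewrite !big_split /= sumrN !sum_ind -!mulr_suml !(sum_pred_nat _ (fun r => t ^+ r.+1)).
have -> : (j < n.+1)%N by apply: leqW.
rewrite ltnS ltn_ord.
have ht : forall m, t ^+ m.+3 = t ^+ m * t ^+ 3 by move=> m; rewrite -exprD addn3.
have ht2 : forall m, t ^+ m.+2 = t ^+ m * t ^+ 2 by move=> m; rewrite -exprD addn2.
have ht1 : forall m, t ^+ m.+1 = t ^+ m * t by move=> m; rewrite exprSr.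
case: j => [[|j1] hj] /=.
- rewrite big_pred0 //.
  case: ifP => h2.
    have -> : (0 == n.-1 :> nat) = false by apply/eqP; lia.
    rewrite expr1; apply: (@eq_by 1 _ _ _ hp); rewrite ?mul0r ?mul1r; ring.
  have -> : n = 1%N by lia.
  rewrite /= expr1; apply: (@eq_by 1 _ _ _ hp); rewrite ?mul0r ?mul1r; ring.
- rewrite (eq_bigl (fun r : 'I_n.+1 => (r : nat) == j1)); last by move=> r; rewrite /= eq_sym.
  rewrite (sum_pred_nat _ (fun r => t ^+ r.+1)).
  have -> : (j1 < n.+1)%N by lia.
  rewrite (ht j1.+1) (ht2 j1.+1) (ht1 j1.+1).
  case: ifP => h2.
    have -> : (j1.+1 == n.-1 :> nat) = false by apply/eqP; lia.
    apply: (@eq_by (t ^+ j1.+1) _ _ _ hp); rewrite ?mul0r ?mul1r; ring.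
  have -> : n = j1.+2 by lia.
  rewrite /= eqxx (ht j1.+1).
  apply: (@eq_by (t ^+ j1.+1) _ _ _ hp); rewrite ?mul0r ?mul1r; ring.
Qed.
End H.
Arguments vx {R n}.

Theorem proposition4p2 (R : realType) (a : R) (n : nat) (ha : 5 < a) :
  forall k : 'I_n.+1, @Edel R n a k \in unitmx.
Proof.
move=> k; rewrite -unitmx_tr -row_free_unit; apply/inj_row_free => v Hv.
set c := v^T.
suff c0 : c = 0 by rewrite -[v]trmxK -/c c0 trmx0.
have Hc : Edel a k *m c = 0 by rewrite /c -(trmxK (Edel a k)) -trmx_mul Hv trmx0.
set Ec := Emx n a *m c.
have HEc : forall r : 'I_n.+1, r != k -> Ec r 0 = 0.
  move=> r; case: (unliftP k r) => [i ->|->]; last by rewrite eqxx.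
  move=> _; pose i' : 'I_n := i; change (Ec (lift k i') 0 = 0).
  transitivity ((Edel a k *m c) i' 0); last by rewrite Hc mxE.
  rewrite [RHS]mxE [LHS]mxE; apply: eq_bigr => j _; by rewrite /Edel [in RHS]mxE.
set w := Ec k 0.
have key : forall t : R, 1 - a * t + a * t ^+ 2 - t ^+ 3 = 0 ->
    t ^+ k.+1 * w = - vx c 0 + t ^+ n.+2 * vx c n.-1.
  move=> t hp.
  have := congr1 (fun M : 'M[R]_1 => M 0 0) (mulmxA (\row_(r < n.+1) t ^+ r.+1) (Emx n a) c).
  rewrite /= [LHS]mxE (bigD1 k) //= big1; last first.
    by move=> r hr; rewrite HEc // mulr0.
  rewrite mxE addr0 => ->.
  rewrite mxE (eq_bigr (fun j : 'I_n => (j == 0%N :> nat)%:R * (- c j 0)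
       + (j == n.-1 :> nat)%:R * (t ^+ n.+2 * c j 0))); last first.
    by move=> j _; rewrite Ecol //; ring.
  by rewrite big_split /= !sum_ind sumrN -mulr_sumr.
set s := a - 1.
have hs4 : 4 < s by rewrite /s; lra.
set d := Num.sqrt (s ^+ 2 - 4).
have hd2 : d ^+ 2 = s ^+ 2 - 4 by rewrite sqr_sqrtr //; nra.
have hd0 : 0 <= d by apply: sqrtr_ge0.
set l := (s + d) / 2.
set mu := (s - d) / 2.
have hlm : mu * l = 1.
  rewrite /mu /l; apply: (@eq_by _ (- (1/4)) (d ^+ 2 - (s ^+ 2 - 4))); first by rewrite hd2 subrr.
  by field.
have hl1 : 1 < l by rewrite /l; lra.
have pr : forall t, t ^+ 2 - s * t + 1 = 0 -> 1 - a * t + a * t ^+ 2 - t ^+ 3 = 0.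
  move=> t ht; apply: (@eq_by _ (1 - t) _ _ _ ht); rewrite /s; ring.
have ql : l ^+ 2 - s * l + 1 = 0.
  rewrite /l; apply: (@eq_by _ (1/4) (d ^+ 2 - (s ^+ 2 - 4))); first by rewrite hd2 subrr.
  by field.
have qm : mu ^+ 2 - s * mu + 1 = 0.
  rewrite /mu; apply: (@eq_by _ (1/4) (d ^+ 2 - (s ^+ 2 - 4))); first by rewrite hd2 subrr.
  by field.
have p1 : 1 - a * 1 + a * 1 ^+ 2 - (1:R) ^+ 3 = 0 by ring.
have K1 := key 1 p1.
have Kl := key l (pr l ql).
have Km := key mu (pr mu qm).
rewrite !expr1n !mul1r in K1.
set v0 := vx c 0 in K1 Kl Km.
set u := vx c n.-1 in K1 Kl Km.
set P := l ^+ k.+1 in Kl.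
set Q := l ^+ n.+2 in Kl.
set D := l ^+ (n.+1 - k).
have hQ : Q = P * D by rewrite /Q /P /D -exprD; congr (_ ^+ _); have := ltn_ord k; lia.
have hPm : mu ^+ k.+1 * P = 1 by rewrite /P -exprMn hlm expr1n.
have hQm : mu ^+ n.+2 * Q = 1 by rewrite /Q -exprMn hlm expr1n.
have Km' : D * w = - Q * v0 + u.
  have -> : D * w = Q * (mu ^+ k.+1 * w).
    rewrite hQ; apply: (@eq_by _ (- (D * w)) (mu ^+ k.+1 * P - 1)); first by rewrite hPm subrr.
    ring.
  rewrite Km; apply: (@eq_by _ (u) (mu ^+ n.+2 * Q - 1)); first by rewrite hQm subrr.
  ring.
have hv0 : v0 = u - w by rewrite K1; ring.
rewrite hv0 hQ in Kl Km'.
have hP1 : 1 < P by rewrite /P exprn_egt1.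
have hD1 : 1 < D by rewrite /D exprn_egt1 //; have := ltn_ord k; lia.
have hw : w * ((P - 1) * (D - 1)) = 0.
  have -> : w * ((P - 1) * (D - 1)) = -((P * w - (- (u - w) + P * D * u)) + (D * w - (- (P * D) * (u - w) + u))) by ring.
  by rewrite Kl Km' !subrr addr0 oppr0.
have w0 : w = 0.
  move/eqP: hw; rewrite !mulf_eq0 => /orP [/eqP //|/orP [|]]; rewrite subr_eq0 => /eqP h.
    by move: hP1; rewrite h ltxx.
  by move: hD1; rewrite h ltxx.
rewrite w0 in Kl hv0.
have u0 : u = 0.
  have : (P * D - 1) * u = (-(u - 0) + P * D * u) - P * 0 by ring.
  rewrite -Kl subrr.
  move/eqP; rewrite mulf_eq0 subr_eq0 => /orP [/eqP h|/eqP //].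
  have : 1 < P * D by rewrite -[1]mulr1; apply: ltr_pM => //; lra.
  by rewrite h ltxx.
have v00 : vx c 0 = 0 by rewrite -/v0 hv0 u0 subr0.
have Eall : forall r : 'I_n.+1, Ec r 0 = 0.
  by move=> r; case: (eqVneq r k) => [->|/HEc //]; rewrite -/w w0.
have hall : forall m j, (j < m)%N -> vx c j = 0.
  elim=> [//|m IH] j; rewrite ltnS leq_eqVlt => /orP [/eqP ->|/IH //].
  case: (leqP n m) => hm; first by rewrite vx_ge.
  case: m IH hm => [|r] IH hm; first exact: v00.
  have hr : (r < n.+1)%N by lia.
  have := Eall (Ordinal hr); rewrite /Ec Erow /= => h.
  have e1 : vx c r = 0 by apply: IH.
  have e2 : (if r is r1.+1 then a * vx c r1 - (if r1 is r2.+1 then vx c r2 else 0) else 0) = 0.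
    case: r {h hm hr e1} IH => [|[|r2]] IH //=.
      by rewrite (IH 0%N) // mulr0 subr0.
    rewrite (IH r2.+1) ?(IH r2) ?mulr0 ?subr0 //; lia.
  by move: h; rewrite e1 e2 mulr0 subr0 addr0.
apply/matrixP => i j; rewrite ord1 [RHS]mxE -vx_ord; exact: (hall i.+1).
Qed.
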